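(* Let $n\ge 1$ and let $V^n$ be the $(n+1)\times(n+1)$ matrix $V^n_{ij}=B^n_j(i/n)$, $0\le i,j\le n$. Define $$H^n_{ij}=\binom{n+1}{i+j+1},\qquad \widetilde H^n_{ij}=\sum_{k=0}^{i+j+1}\binom{n-k+1}{n-i-j}\frac{s(n+1,k)}{n^{n-k+1}},$$ $$T^n_{ij}=\binom{n+1}{j-i},\qquad \widetilde T^n_{ij}=\sum_{k=0}^{j-i}\binom{n-k+1}{j-i-k}\frac{s(n+1,k)}{n^{n-k+1}},$$ $$D^n=\mathrm{diag}\big((-1)^{n-j}\,j!\,(n-j)!\big)_{j=0}^n,\qquad \Delta^n=\mathrm{diag}\Big(\binom{n}{j}\Big)_{j=0}^n,\qquad \widetilde V^n_{ij}=i^j(n-i)^{n-j}.$$ Then $$(V^n)^{-1}=(\Delta^n)^{-1}\big[\widetilde H^nT^n-H^n\widetilde T^n\big](\widetilde V^n)^T(D^n)^{-1}.$$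
   Context: $B^n_j(x)=\binom{n}{j}x^j(1-x)^{n-j}$. $s(n,k)$ denotes the signed Stirling numbers of the first kind, defined by $\prod_{i=0}^{n-1}(y-i)=\sum_{k=0}^{n}s(n,k)y^k$. Conventions: $\binom{a}{b}=0$ if $b<0$ or $b>a$; empty sums are $0$; $0^0=1$. *)

(* Defs.v *)
From HB Require Import structures.
From mathcomp Require Import all_boot all_order all_algebra.
Set Implicit Arguments. Unset Strict Implicit. Unset Printing Implicit Defensive.
Import Order.TTheory GRing.Theory Num.Theory.
Local Open Scope ring_scope.

Definition stirling1 (n k : nat) : int :=
  (\prod_(i < n) ('X - (i%:Z)%:P) : {poly int})`_k.

Definition binz (a b : int) : nat :=
  match a, b with
  | Posz a', Posz b' => 'C(a', b')
  | _, _ => 0%N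
  end.

Section Mats.
Variable R : realFieldType.
Variable n : nat.

Definition bern (j : nat) (x : R) : R :=
  ('C(n, j))%:R * x ^+ j * (1 - x) ^+ (n - j).

Definition Vmx : 'M[R]_(n.+1) :=
  \matrix_(i, j) bern j (i%:R / n%:R).

Definition Hmx : 'M[R]_(n.+1) :=
  \matrix_(i, j) ('C(n.+1, (i + j).+1))%:R.

Definition Htmx : 'M[R]_(n.+1) :=
  \matrix_(i, j) \sum_(0 <= k < (i + j).+2)
     (binz (n%:Z - k%:Z + 1) (n%:Z - i%:Z - j%:Z))%:R
     * (stirling1 n.+1 k)%:~R / (n%:R ^ (n%:Z - k%:Z + 1)).

Definition Tmx : 'M[R]_(n.+1) :=
  \matrix_(i, j) (binz n.+1 (j%:Z - i%:Z))%:R.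

Definition Ttmx : 'M[R]_(n.+1) :=
  \matrix_(i, j) \sum_(0 <= k < (j - i).+1 | (i <= j)%N)
     (binz (n%:Z - k%:Z + 1) (j%:Z - i%:Z - k%:Z))%:R
     * (stirling1 n.+1 k)%:~R / (n%:R ^ (n%:Z - k%:Z + 1)).

Definition Dmx : 'M[R]_(n.+1) :=
  diag_mx (\row_(j < n.+1) ((-1) ^+ (n - j) * (j`!)%:R * ((n - j)`!)%:R)).

Definition Deltamx : 'M[R]_(n.+1) :=
  diag_mx (\row_(j < n.+1) ('C(n, j))%:R).

Definition Vtmx : 'M[R]_(n.+1) :=
  \matrix_(i, j) ((i : nat)%:R ^+ j * (n%:R - (i : nat)%:R) ^+ (n - j)).

End Mats.

(* Main.v *)
Require Import Defs.
From HB Require Import structures.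
From mathcomp Require Import all_boot all_order all_algebra.
From mathcomp Require Import ring zify.
Set Implicit Arguments. Unset Strict Implicit. Unset Printing Implicit Defensive.
Import Order.TTheory GRing.Theory Num.Theory.
Local Open Scope ring_scope.

Lemma sum_nat0 (R : comRingType) m n (F : nat -> R) :
  (forall i : nat, (m <= i)%N -> (i < n)%N -> F i = 0) -> \sum_(m <= i < n) F i = 0.
Proof. by move=> H; rewrite big_nat_cond big1 // => i /andP[/andP[h1 h2] _]; exact: H. Qed.

Lemma eq_sum_nat (R : comRingType) m n (F G : nat -> R) :
  (forall i : nat, (m <= i)%N -> (i < n)%N -> F i = G i) ->
  \sum_(m <= i < n) F i = \sum_(m <= i < n) G i.
Proof. by move=> H; apply: eq_big_nat => i /andP[h1 h2]; exact: H. Qed.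

Lemma shift1 (R : comRingType) (A c : nat) (F : nat -> R) :
  \sum_(0 <= i < A) (if (c <= i)%N then F i else 0) =
  \sum_(0 <= i < A) (if (i + c < A)%N then F (i + c)%N else 0).
Proof.
case: (leqP c A) => cA.
  rewrite (big_cat_nat (n:=c)) //= sum_nat0 ?add0r; last first.
    by move=> i _ h; rewrite ifF //; lia.
  rewrite -{1}(add0n c) big_addn.
  rewrite [RHS](big_cat_nat (n:=A - c)) //=; last by rewrite leq_subr.
  rewrite [X in _ = _ + X]sum_nat0 ?addr0; last first.
    by move=> i h1 h2; rewrite ifF //; lia.
  apply: eq_sum_nat => i _ h.
  have h1 : (c <= i + c)%N by lia.
  have h2 : (i + c < A)%N by lia.
  by rewrite h1 h2.
rewrite !sum_nat0 //.
  by move=> i _ h; rewrite ifF //; lia.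
by move=> i _ h; rewrite ifF //; lia.
Qed.

Lemma sum3 (R : comRingType) (M P Q : nat) (a b : nat -> nat -> R) :
  \sum_(0 <= m < M) (\sum_(0 <= p < P) a m p) * (\sum_(0 <= q < Q) b m q) =
  \sum_(0 <= p < P) \sum_(0 <= q < Q) \sum_(0 <= m < M) a m p * b m q.
Proof.
under eq_bigr => m _ do rewrite big_distrl /=.
under eq_bigr => m _ do under eq_bigr => p _ do rewrite big_distrr /=.
rewrite exchange_big_nat /=; apply: eq_bigr => p _.
by rewrite exchange_big_nat.
Qed.

Lemma sum2 (R : comRingType) (P Q : nat) (a b : nat -> R) :
  (\sum_(0 <= p < P) a p) * (\sum_(0 <= q < Q) b q) =
  \sum_(0 <= p < P) \sum_(0 <= q < Q) a p * b q.
Proof. by rewrite big_distrl; apply: eq_bigr => p _; rewrite big_distrr. Qed.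

Lemma ifmull (R : comRingType) (b : bool) (x y : R) :
  (if b then x else 0) * y = if b then x * y else 0.
Proof. by case: b; rewrite ?mul0r. Qed.

Section Bez.
Variable R : comRingType.
Variable n : nat.
Variables u v u' v' : R.

Definition phi j := u ^+ j * v ^+ (n - j).
Definition psi l := u' ^+ l * v' ^+ (n - l).
Definition Gpq p q := \sum_(0 <= m < n.+1)
  (if (m < p)%N && (q + m < n.+1)%N then phi (p - m.+1)%N * psi (q + m)%N else 0).
Definition Aexp s l := u ^+ (s - l) * v ^+ (n.+1 - (s - l)) * (u' ^+ l * v' ^+ (n.+1 - l)).

Lemma Gtele p q : (p <= n.+1)%N -> (q <= n.+1)%N ->
  (u * v' - u' * v) * Gpq p q = Aexp (p + q) q - Aexp (p + q) (minn (p + q) n.+1).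
Proof.
move=> hp hq.
set K := minn p (n.+1 - q).
have hK : (K <= n.+1)%N by rewrite /K; lia.
rewrite /Gpq (big_cat_nat (n:=K)) //= [X in _ * (_ + X)]sum_nat0 ?addr0; last first.
  by move=> i h1 h2; rewrite ifF //; apply/negbTE; rewrite negb_and -!leqNgt; lia.
rewrite mulr_sumr.
rewrite (@telescope_sumr_eq _ 0 K (fun k => - Aexp (p + q) (q + k))) //.
  have -> : (q + K = minn (p + q) n.+1)%N by rewrite /K; lia.
  by rewrite addn0 opprK addrC.
move=> m /andP[_ hm].
have c1 : (m < p)%N by rewrite /K in hm; lia.
have c2 : (q + m < n.+1)%N by rewrite /K in hm; lia.
rewrite c1 c2 /= addnS.
rewrite /Aexp /phi /psi.
have e1 : (p + q - (q + m) = (p - m.+1).+1)%N by lia.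
have e2 : (n.+1 - (p - m.+1).+1 = n - (p - m.+1))%N by lia.
have e3 : (n.+1 - (q + m) = (n - (q + m)).+1)%N by lia.
have e4 : (p + q - (q + m).+1 = p - m.+1)%N by lia.
have e5 : (n.+1 - (p - m.+1) = (n - (p - m.+1)).+1)%N by lia.
have e6 : (n.+1 - (q + m).+1 = n - (q + m))%N by lia.
rewrite e1 e2 e3 e4 e5 e6 !exprS; ring.
Qed.


Definition Fh (f : nat -> R) (x y : R) := \sum_(0 <= p < n.+2) f p * (x ^+ p * y ^+ (n.+1 - p)).

Definition Tfg (f g : nat -> R) := \sum_(0 <= j < n.+1) \sum_(0 <= l < n.+1)
  (\sum_(0 <= m < n.+1) f (j + m)%N.+1 * (if (m <= l)%N then g (l - m)%N else 0)) * phi j * psi l.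

Lemma shiftf (f : nat -> R) (hf : forall k, (n.+1 < k)%N -> f k = 0) m :
  \sum_(0 <= j < n.+1) f (j + m)%N.+1 * phi j =
  \sum_(0 <= p < n.+2) (if (m.+1 <= p)%N then f p * phi (p - m.+1)%N else 0).
Proof.
rewrite [RHS]shift1 [RHS]big_nat_recr //= ifF; last by lia.
rewrite addr0; apply: eq_sum_nat => j _ hj.
rewrite addnK addnS; case: ifP => // h.
by rewrite hf ?mul0r //; lia.
Qed.

Lemma shiftg (g : nat -> R) m :
  \sum_(0 <= l < n.+1) (if (m <= l)%N then g (l - m)%N else 0) * psi l =
  \sum_(0 <= q < n.+2) (if (q + m < n.+1)%N then g q * psi (q + m)%N else 0).
Proof.
under eq_bigr => l _ do rewrite ifmull.
rewrite shift1 [RHS]big_nat_recr //= ifF; last by lia.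
by rewrite addr0; apply: eq_sum_nat => j _ hj; rewrite addnK.
Qed.

Lemma TfgE (f g : nat -> R) (hf : forall k, (n.+1 < k)%N -> f k = 0) :
  Tfg f g = \sum_(0 <= p < n.+2) \sum_(0 <= q < n.+2) f p * g q * Gpq p q.
Proof.
rewrite /Tfg.
have EQ : forall j l : nat, (\sum_(0%N <= m < n.+1) f (j + m)%N.+1 * (if (m <= l)%N then g (l - m)%N else 0)) * phi j * psi l
   = \sum_(0%N <= m < n.+1) (f (j + m)%N.+1 * phi j) * ((if (m <= l)%N then g (l - m)%N else 0) * psi l).
  move=> j l; rewrite !big_distrl /=; apply: eq_bigr => m _; ring.
under eq_bigr => j _ do under eq_bigr => l _ do rewrite EQ.
have S3 := (sum3 n.+1 n.+1 n.+1 (fun m j => f (j + m)%N.+1 * phi j)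
   (fun m l => (if (m <= l)%N then g (l - m)%N else 0) * psi l)).
rewrite /= in S3; rewrite -S3.
under eq_bigr => m _ do rewrite shiftf // shiftg.
rewrite sum3; apply: eq_bigr => p _; apply: eq_bigr => q _.
rewrite /Gpq big_distrr /=; apply: eq_bigr => m _.
case: ifP => h1; case: ifP => h2; rewrite /=.
- ring.
- by rewrite !mulr0.
- by rewrite !mul0r mulr0.
- by rewrite !mul0r mulr0.
Qed.

Lemma bezout (f g : nat -> R) (hf : forall k, (n.+1 < k)%N -> f k = 0)
  (hg : forall k, (n.+1 < k)%N -> g k = 0) :
  (u * v' - u' * v) * (Tfg f g - Tfg g f) =
  Fh f u v * Fh g u' v' - Fh f u' v' * Fh g u v.
Proof.
rewrite !TfgE // [X in _ * (_ - X)]exchange_big_nat /=.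
rewrite /Fh !sum2.
rewrite -!sumrB mulr_sumr; apply: eq_big_nat => p /andP[_ hp].
rewrite -!sumrB mulr_sumr; apply: eq_big_nat => q /andP[_ hq].
have G1 := Gtele (p:=p) (q:=q).
have G2 := Gtele (p:=q) (q:=p).
have E1 : (u * v' - u' * v) * (f p * g q * Gpq p q - g q * f p * Gpq q p) =
   f p * g q * ((u * v' - u' * v) * Gpq p q - (u * v' - u' * v) * Gpq q p) by ring.
rewrite E1 G1 ?G2; try lia.
rewrite [(q + p)%N]addnC /Aexp addKn addnK; ring.
Qed.

End Bez.

Lemma Tfg_morph (R1 R2 : comRingType) (h : {rmorphism R1 -> R2}) n u v u' v' f g :
  h (Tfg n u v u' v' f g) = Tfg n (h u) (h v) (h u') (h v') (h \o f) (h \o g).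
Proof.
rewrite /Tfg rmorph_sum; apply: eq_bigr => j _.
rewrite rmorph_sum; apply: eq_bigr => l _.
rewrite /phi /psi !rmorphM !rmorphXn rmorph_sum; congr (_ * _ * (_ * _)).
apply: eq_bigr => m _; rewrite rmorphM /=; case: ifP => _ //.
by rewrite rmorph0.
Qed.

Lemma Tfg_ext (R : comRingType) n (u v u' v' : R) (f f' g g' : nat -> R) :
  f =1 f' -> g =1 g' -> Tfg n u v u' v' f g = Tfg n u v u' v' f' g'.
Proof.
move=> ef eg; rewrite /Tfg; apply: eq_bigr => j _; apply: eq_bigr => l _.
congr (_ * _ * _); apply: eq_bigr => m _; rewrite ef; case: ifP => // _.
by rewrite eg.
Qed.

Section Conc.
Variable R : realFieldType.
Variable n : nat.
Hypothesis hn : (1 <= n)%N.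

Definition stc k : R := (stirling1 n.+1 k)%:~R.
Definition cst k : R := stc k / n%:R ^+ (n.+1 - k).
Definition wsq p : R := \sum_(0 <= k < n.+2)
  (if (k <= p)%N then ('C(n.+1 - k, p - k))%:R * cst k else 0).
Definition esq p : R := ('C(n.+1, p))%:R.

Lemma wsq0 p : (n.+1 < p)%N -> wsq p = 0.
Proof.
move=> hp; rewrite /wsq sum_nat0 // => k _ hk.
by rewrite bin_small ?mul0r ?if_same //; lia.
Qed.

Lemma esq0 p : (n.+1 < p)%N -> esq p = 0.
Proof. by move=> hp; rewrite /esq bin_small. Qed.

Lemma nR0 : n%:R != 0 :> R.
Proof. by rewrite pnatr_eq0 -lt0n. Qed.

Definition omega : {poly R} := \prod_(i < n.+1) ('X - (i%:R)%:P).

Lemma omega_expand : omega = \sum_(0 <= k < n.+2) (stc k)%:P * 'X^k.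
Proof.
rewrite /omega.
set pz := (\prod_(i < n.+1) ('X - (i%:Z)%:P) : {poly int}).
have Hs : size pz = n.+2.
 rewrite /pz size_prod_XsubC.
 by rewrite [index_enum _]unlock -enumT size_enum_ord.
have -> : \prod_(i < n.+1) ('X - (i%:R)%:P) = map_poly (intr : int -> R) pz.
  rewrite /pz rmorph_prod; apply: eq_bigr => i _.
  by rewrite rmorphB /= map_polyX map_polyC.
rewrite -[pz]coefK poly_def Hs rmorph_sum big_mkord; apply: eq_bigr => k _.
by rewrite -mul_polyC rmorphM /= map_polyC map_polyXn.
Qed.


Definition wP p : {poly R} := (wsq p)%:P.
Definition eP p : {poly R} := (esq p)%:P.

Lemma FhE (x y : {poly R}) : Fh n eP x y = (x + y) ^+ n.+1.
Proof.
rewrite /Fh (addrC x) exprDn big_mkord; apply: eq_bigr => i _.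
rewrite /eP /esq.
rewrite polyC_natr -[RHS]mulr_natl.
by rewrite (mulrC (x ^+ _)).
Qed.

Lemma stc_cst k : (k <= n.+1)%N -> stc k = cst k * n%:R ^+ (n.+1 - k).
Proof.
move=> hk; rewrite /cst -mulrA mulVf ?mulr1 //.
by rewrite expf_neq0 // nR0.
Qed.

Lemma FhW (x y : {poly R}) (hxy : x + y = (n%:R)%:P) :
  Fh n wP x y = \sum_(0 <= k < n.+2) (stc k)%:P * x ^+ k.
Proof.
rewrite /Fh /wP.
under eq_bigr => p _ do rewrite /wsq rmorph_sum big_distrl /=.
rewrite exchange_big_nat /=; apply: eq_big_nat => k /andP[_ hk].
under eq_bigr => p _ do rewrite (fun_if (fun c => c%:P)) polyC0 ifmull.
rewrite shift1 (big_cat_nat (n:=n.+2 - k)) //=; last by rewrite leq_subr.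
rewrite [X in _ + X]sum_nat0 ?addr0; last first.
  by move=> i h1 h2; rewrite ifF //; lia.
rewrite stc_cst; last by lia.
have E : ((n%:R : R) ^+ (n.+1 - k))%:P = (y + x) ^+ (n.+1 - k).
  by rewrite (addrC y) hxy rmorphXn.
rewrite polyCM E exprDn big_distrr /= big_distrl /= big_mkord.
have -> : (n.+2 - k = (n.+1 - k).+1)%N by lia.
apply: eq_bigr => i _; rewrite ifT; last by case: i => /= i hi; lia.
have -> : (n.+1 - (i + k) = n.+1 - k - i)%N by lia.
rewrite exprD polyCM polyC_natr -[in RHS]mulr_natl.
rewrite addnK; ring.
Qed.


Lemma omega_root (b : nat) : (b <= n)%N -> omega.[b%:R] = 0.
Proof.
move=> hb; have hb' : (b < n.+1)%N by lia.
by rewrite /omega horner_prod (bigD1 (Ordinal hb')) //= hornerXsubC subrr mul0r.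
Qed.

Definition omb (b : 'I_n.+1) : {poly R} := \prod_(i < n.+1 | i != b) ('X - (i%:R)%:P).

Lemma omega_split (b : 'I_n.+1) : omega = ('X - (b%:R)%:P) * omb b.
Proof. by rewrite /omega (bigD1 b). Qed.

Lemma prodfact m : \prod_(0 <= i < m) (i.+1)%:R = (m`!)%:R :> R.
Proof.
elim: m => [|m IH]; first by rewrite big_geq.
by rewrite big_nat_recr //= IH factS natrM mulrC.
Qed.

Lemma prodN_nat m (F : nat -> R) :
  \prod_(0 <= i < m) (- F i) = (-1) ^+ m * \prod_(0 <= i < m) F i.
Proof.
elim: m => [|m IH]; first by rewrite !big_geq // mul1r.
by rewrite !big_nat_recr //= IH exprS; ring.
Qed.

Lemma omb_eval (a b : 'I_n.+1) : (omb b).[a%:R] =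
  if a == b then (-1) ^+ (n - a) * (a`!)%:R * ((n - a)`!)%:R else 0.
Proof.
rewrite /omb horner_prod; case: eqP => [<-|/eqP hab].
  rewrite big_mkcond /= -(big_mkord xpredT (fun i => if i != (a : nat) then ('X - (i%:R)%:P).[a%:R] else 1)).
  have ha : (a < n.+1)%N := ltn_ord a.
  rewrite (big_cat_nat (n:=a)) //=; last by lia.
  rewrite [X in _ * X]big_ltn // eqxx mul1r.
  have P1 : \prod_(0 <= i < a) (if i != (a : nat) then ('X - (i%:R)%:P).[a%:R] else 1)
      = (a`!)%:R :> R.
    rewrite -prodfact big_nat_rev /=; apply: eq_big_nat => i /andP[_ hi].
    rewrite ifT; last by apply/eqP; lia.
    rewrite hornerXsubC -natrB; last by lia.
    by congr (_%:R); lia.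
  have P2 : \prod_(a.+1 <= i < n.+1) (if i != (a : nat) then ('X - (i%:R)%:P).[a%:R] else 1)
      = (-1) ^+ (n - a) * ((n - a)`!)%:R :> R.
    rewrite -(add0n a.+1) big_addn -prodfact -prodN_nat.
    have -> : (n.+1 - a.+1 = n - a)%N by lia.
    apply: eq_big_nat => i /andP[_ hi].
    rewrite ifT; last by apply/eqP; lia.
    have e : (i + a.+1)%:R = (i.+1)%:R + a%:R :> R by rewrite -natrD; congr (_%:R); lia.
    rewrite hornerXsubC e; ring.
  rewrite P1 P2; ring.
by rewrite (bigD1 a) //= hornerXsubC subrr mul0r.
Qed.


Lemma Tfg_horner (x : R) m (u v u' v' : {poly R}) (f g : nat -> {poly R}) :
  (Tfg m u v u' v' f g).[x] =
  Tfg m u.[x] v.[x] u'.[x] v'.[x] (fun k => (f k).[x]) (fun k => (g k).[x]).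
Proof. exact: (Tfg_morph (horner_eval x) m u v u' v' f g). Qed.

Lemma FhW_const (c : R) :
  \sum_(0 <= k < n.+2) (stc k)%:P * (c%:P) ^+ k = (omega.[c])%:P.
Proof.
rewrite omega_expand horner_sum rmorph_sum; apply: eq_bigr => k _.
by rewrite hornerM hornerC hornerXn rmorphM rmorphXn.
Qed.

Definition entryval (a b : 'I_n.+1) : R :=
  if a == b then (-1) ^+ (n - a) * (a`!)%:R * ((n - a)`!)%:R else 0.

Lemma entry (a b : 'I_n.+1) :
  Tfg n (a%:R : R) (n%:R - a%:R) (b%:R) (n%:R - b%:R) wsq esq -
  Tfg n (a%:R : R) (n%:R - a%:R) (b%:R) (n%:R - b%:R) esq wsq =
  n%:R ^+ n * entryval a b.
Proof.
set u := 'X : {poly R}. set v := (n%:R)%:P - 'X : {poly R}.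
set u' := (b%:R : R)%:P. set v' := (n%:R - b%:R : R)%:P.
have hw : forall k, (n.+1 < k)%N -> wP k = 0 by move=> k hk; rewrite /wP wsq0.
have he : forall k, (n.+1 < k)%N -> eP k = 0 by move=> k hk; rewrite /eP esq0.
have B := bezout u v u' v' hw he.
have huv : u + v = (n%:R)%:P by rewrite /u /v addrC subrK.
have huv' : u' + v' = (n%:R)%:P by rewrite /u' /v' -polyCD addrC subrK.
rewrite (FhW huv) (FhW huv') (FhE u' v') huv' /u' FhW_const omega_root in B; last first.
  by have := ltn_ord b; lia.
rewrite polyC0 mul0r subr0 -omega_expand (omega_split b) in B.
have E1 : u * v' - u' * v = (n%:R)%:P * ('X - (b%:R)%:P).
  by rewrite /u /v /u' /v' polyCB; ring.
rewrite E1 in B.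
set Qp := (Tfg n u v u' v' wP eP - Tfg n u v u' v' eP wP) in B.
have hXb : ('X - (b%:R)%:P) != 0 :> {poly R} by rewrite polyXsubC_eq0.
have hnP : (n%:R)%:P != 0 :> {poly R} by rewrite polyC_eq0 nR0.
have HQ : Qp = (n%:R)%:P ^+ n * omb b.
  apply: (mulfI hnP); apply: (mulfI hXb).
  transitivity ((n%:R)%:P * ('X - (b%:R)%:P) * Qp); first by ring.
  rewrite B exprS; ring.
have := congr1 (fun p => p.[a%:R]) HQ.
rewrite /= {1}/Qp hornerD hornerN !Tfg_horner hornerM horner_exp omb_eval.
rewrite /u /v /u' /v' !hornerE /entryval => <-.
by congr (_ - _); apply: Tfg_ext => k; rewrite /wP /eP hornerC.
Qed.


Lemma binz_negl (x y : int) : x < 0 -> binz x y = 0%N.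
Proof. by case: x => [a|a] h //; exfalso; lia. Qed.
Lemma binz_negr (x y : int) : y < 0 -> binz x y = 0%N.
Proof. by case: x => [a|a] //; case: y => [b|b] h //; exfalso; lia. Qed.

Lemma sum_extend (A B : nat) (F : nat -> R) : (A <= B)%N ->
  (forall k, (A <= k)%N -> (k < B)%N -> F k = 0) ->
  \sum_(0 <= k < A) F k = \sum_(0 <= k < B) F k.
Proof.
move=> hAB hF; rewrite [RHS](big_cat_nat (n:=A)) //=.
by rewrite [X in _ = _ + X]sum_nat0 ?addr0.
Qed.

Lemma HtE (j m : 'I_n.+1) : Htmx R n j m = wsq (j + m).+1.
Proof.
rewrite mxE /wsq.
set d := (j + m)%N.
set G := fun k : nat => if (k <= d.+1)%N && (k <= n.+1)%N then
   ('C(n.+1 - k, d.+1 - k))%:R * cst k else 0.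
transitivity (\sum_(0 <= k < d + n + 3) G k).
  rewrite -[RHS](@sum_extend (d.+2) _ G); last 2 first.
  - lia.
  - by move=> k h1 h2; rewrite /G ifF //; lia.
  apply: eq_sum_nat => k _ hk; rewrite /G.
  case: (leqP k n.+1) => hkn.
    rewrite ifT; last by lia.
    have -> : n%:Z - k%:Z + 1 = Posz (n.+1 - k) by lia.
    rewrite /cst /stc mulrA; congr (_ * _ / _).
    case: (leqP d n) => hdn.
      have -> : n%:Z - j%:Z - m%:Z = Posz (n - d) by rewrite /d; lia.
      rewrite /= -bin_sub; last by lia.
      by congr ('C(_, _))%:R; lia.
    rewrite binz_negr; last by rewrite /d; lia.
    by rewrite bin_small //; lia.
  rewrite ifF; last by lia.
  by rewrite binz_negl ?mul0r //; lia.
rewrite -[LHS](@sum_extend (n.+2) _ G); last 2 first.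
- lia.
- by move=> k h1 h2; rewrite /G ifF //; lia.
apply: eq_sum_nat => k _ hk; rewrite /G.
by case: (leqP k d.+1) => h //=; rewrite ifT //; lia.
Qed.


Lemma TtE (m l : 'I_n.+1) :
  Ttmx R n m l = if (m <= l)%N then wsq (l - m) else 0.
Proof.
rewrite mxE; case: (leqP m l) => hml; last first.
  by rewrite big_mkcond /= sum_nat0 // => k _ _; rewrite ifF //; lia.
rewrite big_mkcond /=.
set d := (l - m)%N.
set G := fun k : nat => if (k <= d)%N then ('C(n.+1 - k, d - k))%:R * cst k else 0.
have hd : (d <= n)%N by have := ltn_ord l; rewrite /d; lia.
transitivity (\sum_(0 <= k < n.+2) G k); last first.
  by apply: eq_sum_nat => k _ hk.
rewrite -[RHS](@sum_extend (d.+1) _ G); last 2 first.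
- lia.
- by move=> k h1 h2; rewrite /G ifF //; lia.
apply: eq_sum_nat => k _ hk; rewrite /G ifT; last by lia.
have -> : n%:Z - k%:Z + 1 = Posz (n.+1 - k) by lia.
have -> : l%:Z - m%:Z - k%:Z = Posz (d - k) by rewrite /d; lia.
by rewrite /cst /stc mulrA.
Qed.

Lemma TE (m l : 'I_n.+1) :
  Tmx R n m l = if (m <= l)%N then esq (l - m) else 0.
Proof.
rewrite mxE; case: (leqP m l) => hml.
  by have -> : l%:Z - m%:Z = Posz (l - m) by lia.
by rewrite binz_negr //; lia.
Qed.

Lemma HE (j m : 'I_n.+1) : Hmx R n j m = esq (j + m).+1.
Proof. by rewrite mxE. Qed.

Definition Mx := Htmx R n *m Tmx R n - Hmx R n *m Ttmx R n.

Lemma entryM (a b : 'I_n.+1) :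
  (Vtmx R n *m Mx *m (Vtmx R n)^T) a b =
  Tfg n (a%:R : R) (n%:R - a%:R) (b%:R) (n%:R - b%:R) wsq esq -
  Tfg n (a%:R : R) (n%:R - a%:R) (b%:R) (n%:R - b%:R) esq wsq.
Proof.
rewrite mxE.
under eq_bigr => l _ do rewrite !mxE big_distrl /=.
rewrite exchange_big /= /Tfg -sumrB big_mkord; apply: eq_bigr => j _.
rewrite -sumrB big_mkord; apply: eq_bigr => l _.
rewrite /Mx !mxE !big_mkord.
under eq_bigr => m _ do rewrite HtE TE.
under [X in _ * (_ - X) * _ = _]eq_bigr => m _ do rewrite HE TtE.
rewrite /phi /psi; ring.
Qed.


Lemma F2 : Vtmx R n *m Mx *m (Vtmx R n)^T = (n%:R ^+ n) *: Dmx R n.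
Proof.
apply/matrixP => a b; rewrite entryM entry /entryval !mxE.
by case: eqP => _; rewrite ?mulr1n ?mulr0n.
Qed.

Lemma F1 : Vmx R n = (n%:R ^+ n)^-1 *: (Vtmx R n *m Deltamx R n).
Proof.
apply/matrixP => a j; rewrite /Deltamx mul_mx_diag !mxE /bern.
have hn0 := nR0.
have e1 : 1 - a%:R / n%:R = (n%:R - a%:R) / n%:R :> R by field.
rewrite e1 !expr_div_n.
have e2 : (n%:R : R) ^+ n = n%:R ^+ j * n%:R ^+ (n - j).
  by rewrite -exprD subnKC //; have := ltn_ord j; lia.
rewrite e2; field.
by rewrite !expf_neq0.
Qed.

Lemma Dunit : Dmx R n \in unitmx.
Proof.
rewrite unitmxE det_diag unitfE; apply/prodf_neq0 => i _.
rewrite mxE !mulf_neq0 ?signr_eq0 // pnatr_eq0 -lt0n fact_gt0 //.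
Qed.

Lemma Deltaunit : Deltamx R n \in unitmx.
Proof.
rewrite unitmxE det_diag unitfE; apply/prodf_neq0 => i _.
by rewrite mxE pnatr_eq0 -lt0n bin_gt0 -ltnS.
Qed.

End Conc.

Theorem corollary2p8 (R : realFieldType) (n : nat) (hn : (1 <= n)%N) :
  Vmx R n \in unitmx /\
  invmx (Vmx R n) =
    invmx (Deltamx R n) *m (Htmx R n *m Tmx R n - Hmx R n *m Ttmx R n)
      *m (Vtmx R n)^T *m invmx (Dmx R n).
Proof.
have hc : (n%:R ^+ n : R) != 0 by rewrite expf_neq0 // nR0.
set c : R := n%:R ^+ n.
set RHS := invmx (Deltamx R n) *m _ *m _ *m _.
have HX : Vtmx R n *m (c^-1 *: (Mx R n *m (Vtmx R n)^T *m invmx (Dmx R n))) = 1%:M.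
  rewrite -scalemxAr !mulmxA (F2 R hn) -(scalemxAl c) mulmxV ?Dunit //.
  by rewrite scalerA mulVf // scale1r.
have HY := mulmx1C HX.
rewrite -scalemxAl in HY.
have HV : RHS *m Vmx R n = 1%:M.
  rewrite (F1 R hn) -/c -scalemxAr /RHS.
  transitivity (invmx (Deltamx R n) *m (c^-1 *: (Mx R n *m (Vtmx R n)^T *m invmx (Dmx R n) *m Vtmx R n))
      *m Deltamx R n).
    rewrite -scalemxAr.
    rewrite -scalemxAl.
    by rewrite /Mx !mulmxA.
  by rewrite HY mulmx1 mulVmx // Deltaunit.
have [_ VU] := mulmx1_unit HV.
split=> //.
by rewrite -(mul1mx (invmx (Vmx R n))) -HV -mulmxA mulmxV // mulmx1.
Qed.
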